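(* Let $\mathbf{Y}$ be the class of all finite target sets $\mathcal{Y}$ (each target $y$ equipped with a vector $\vec{t}(y)\in\mathbb{R}^R$), and let $\mathbf{A}$ be the class of deterministic algorithms that, for every query $x$ (with vector $\vec{u}(x)\in\mathbb{R}^R$) and every $K$, exactly compute a top-$K$ set $S_x^K\in\arg\max_{\mathcal{S}\in[\mathcal{Y}]^K}\min_{y\in\mathcal{S}}s(x,y)$, where $s(x,y)=\vec{u}(x)^\intercal\vec{t}(y)$, without making wild guesses. Then Fagin's algorithm is not instance-optimal over $\mathbf{A}$ and $\mathbf{Y}$.
   Context: $[\mathcal{Y}]^K$ denotes the set of all $K$-element subsets of $\mathcal{Y}$. Access model: for each $r=1,\dots,R$ there is a list $L_r$ of all targets sorted so that $u_r(x)t_r(y)$ is non-increasing along the list; algorithms discover targets by reading these lists sequentially (sorted access) and may compute scores $s(x,y)$ of targets. An algorithm makes a wild guess if it computes $s(x,y)$ for a target $y$ before $y$ has been observed in any of the lists $L_1,\dots,L_R$. Fagin's algorithm: read the lists $L_1,\dots,L_R$ in parallel, one position per list per step, until at least $K$ targets have been observed in every one of the $R$ lists; then compute $s(x,y)$ for every target observed so far and return the $K$ highest-scoring ones. Instance optimality: writing $\mathrm{cost}(\mathcal{A},\mathcal{Y},x)$ for the cost (running time) of algorithm $\mathcal{A}$ on target set $\mathcal{Y}$ and query $x$, an algorithm $\mathcal{B}\in\mathbf{A}$ is instance-optimal over $\mathbf{A}$ and $\mathbf{Y}$ if there exist constants $c,c'$ such that $\mathrm{cost}(\mathcal{B},\mathcal{Y},x)\le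 c\cdot\mathrm{cost}(\mathcal{A},\mathcal{Y},x)+c'$ for every $\mathcal{A}\in\mathbf{A}$, every $\mathcal{Y}\in\mathbf{Y}$ and every query $x$. *)

(* Defs.v *)
From Stdlib Require Import Reals.
From mathcomp Require Import all_boot all_order all_algebra.
From mathcomp Require Import Rstruct.
Import Order.TTheory GRing.Theory Num.Theory.

Set Implicit Arguments.
Unset Strict Implicit.
Unset Printing Implicit Defensive.

Local Open Scope ring_scope.

(* The number R of lists is a fixed parameter (coordinates r = 0, ..., R-1). *)
(* Targets are identified by the natural numbers 0, ..., n-1; target y has   *)
(* vector t(y) = (t y 0, ..., t y (R-1)); the query x has vector             *)
(* u(x) = (u 0, ..., u (R-1)).  The list L_r (r < R) is a permutation of the *)
(* targets sorted so that u_r(x) t_r(y) is non-increasing (ties are broken   *)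
(* arbitrarily, so the lists are part of the instance).                      *)

Record instance := Instance {
  n_targets : nat;
  qvec : nat -> R;                 (* u(x), coordinates r < R meaningful *)
  tvec : nat -> nat -> R;          (* tvec y r = t_r(y) *)
  lists : nat -> seq nat
}.

Definition lval (I : instance) (r y : nat) : R := qvec I r * tvec I y r.

Definition score (Rn : nat) (I : instance) (y : nat) : R :=
  \sum_(r < Rn) lval I r y.

Definition valid_instance (Rn : nat) (I : instance) : Prop :=
  forall r, (r < Rn)%N ->
    perm_eq (lists I r) (iota 0 (n_targets I)) /\
    sorted (fun a b => lval I r b <= lval I r a) (lists I r).

Definition is_Ksubset (n K : nat) (S : seq nat) : bool :=
  [&& uniq S, size S == K & all (fun y => (y < n)%N) S].

(* minimum of f over a nonempty list (value 0 on the empty list, never used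
   for K >= 1) *)
Definition min_over (f : nat -> R) (S : seq nat) : R :=
  match S with
  | [::] => 0
  | y :: S' => foldr (fun z m => Num.min (f z) m) (f y) S'
  end.

Definition is_topK (Rn : nat) (I : instance) (K : nat) (S : seq nat) : Prop :=
  is_Ksubset (n_targets I) K S /\
  forall S', is_Ksubset (n_targets I) K S' ->
    min_over (score Rn I) S' <= min_over (score Rn I) S.

Inductive action :=
  | SortedAccess of nat          (* read the next position of list L_r *)
  | ComputeScore of nat
  | Output of seq nat.

Inductive event :=
  | EvAccess of nat & option (nat * R)
      (* sorted access to list r: the next target with its value u_r t_r(y),
         or None if the list is exhausted (or r >= R) *)
  | EvScore of nat & R.

(* A deterministic algorithm: given K, the query vector u(x) and the history
   of observations, it chooses its next action. *)
Definition algorithm := nat -> (nat -> R) -> seq event -> action.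

Definition accesses_to (r : nat) (h : seq event) : nat :=
  count (fun e => if e is EvAccess r' _ then r' == r else false) h.

Definition seen_in (r : nat) (h : seq event) : seq nat :=
  pmap (fun e => match e with
                 | EvAccess r' (Some (y, _)) => if r' == r then Some y else None
                 | _ => None end) h.

Definition observed (h : seq event) : seq nat :=
  pmap (fun e => match e with
                 | EvAccess _ (Some (y, _)) => Some y
                 | _ => None end) h.

Definition respond (Rn : nat) (I : instance) (h : seq event) (a : action)
  : event :=
  match a with
  | SortedAccess r =>
      let p := accesses_to r h in
      EvAccess r
        (if (r < Rn)%N && (p < size (lists I r))%N then
           let y := nth 0%N (lists I r) p in Some (y, lval I r y)
         else None)
  | ComputeScore y => EvScore y (score Rn I y)
  | Output _ => EvScore 0%N 0 (* never used *)
  end.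

Fixpoint history (Rn : nat) (A : algorithm) (K : nat) (I : instance) (k : nat)
  : seq event :=
  match k with
  | 0 => [::]
  | k'.+1 =>
      let h := history Rn A K I k' in
      match A K (qvec I) h with
      | Output _ => h
      | a => rcons h (respond Rn I h a)
      end
  end.

(* A halts on instance I with cost c (number of sorted accesses plus score
   computations performed) and output S *)
Definition runs (Rn : nat) (A : algorithm) (K : nat) (I : instance)
    (c : nat) (S : seq nat) : Prop :=
  A K (qvec I) (history Rn A K I c) = Output S /\
  forall k, (k < c)%N ->
    forall S', A K (qvec I) (history Rn A K I k) <> Output S'.

Definition no_wild_guess (Rn : nat) (A : algorithm) (K : nat) (I : instance)
    (c : nat) : Prop :=
  forall k, (k < c)%N -> forall y,
    A K (qvec I) (history Rn A K I k) = ComputeScore y ->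
    y \in observed (history Rn A K I k).

Definition in_class (Rn : nat) (A : algorithm) : Prop :=
  forall K I, valid_instance Rn I -> (K <= n_targets I)%N ->
    exists c S, runs Rn A K I c S /\ no_wild_guess Rn A K I c /\
                is_topK Rn I K S.

Definition instance_optimal (Rn : nat) (K : nat) (B : algorithm) : Prop :=
  exists c c' : R, forall A, in_class Rn A ->
    forall I, valid_instance Rn I -> (K <= n_targets I)%N ->
    forall cB SB cA SA, runs Rn B K I cB SB -> runs Rn A K I cA SA ->
      (cB%:R : R) <= c * cA%:R + c'.

Definition is_score_event (e : event) : bool :=
  if e is EvScore _ _ then true else false.

Definition is_access_event (e : event) : bool :=
  if e is EvAccess _ _ then true else false.

Definition scored (h : seq event) : seq (nat * R) :=
  pmap (fun e => if e is EvScore y s then Some (y, s) else None) h.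

Definition n_seen_everywhere (Rn : nat) (h : seq event) : nat :=
  size [seq y <- undup (observed h) | all (fun r => y \in seen_in r h) (iota 0 Rn)].

Definition fagin (Rn : nat) : algorithm := fun K u h =>
  let score_phase :=
    let cands := undup (observed h) in
    let done := map fst (scored h) in
    match [seq y <- cands | y \notin done] with
    | y :: _ => ComputeScore y
    | [::] =>
        let sc := scored h in
        let sorted_sc := sort (fun a b : nat * R => b.2 <= a.2) sc in
        Output (take K (map fst sorted_sc))
    end in
  if has is_score_event h then score_phase
  else
    let na := count is_access_event h in
    (* in the middle of a parallel step, or stopping condition not met *)
    if (na %% Rn != 0)%N || (n_seen_everywhere Rn h < K)%N
    then SortedAccess (na %% Rn)
    else score_phase.

(* Main.v *)
Require Import Defs.
From Stdlib Require Import Reals ClassicalEpsilon Classical.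
From mathcomp Require Import all_boot all_order all_algebra.
From mathcomp Require Import Rstruct zify.
Import Order.TTheory GRing.Theory Num.Theory.
Local Open Scope ring_scope.
Set Implicit Arguments.
Unset Strict Implicit.
Unset Printing Implicit Defensive.

Lemma foldr_min_mem (f : nat -> R) b (s : seq nat) :
  foldr (fun z m => Num.min (f z) m) b s \in b :: map f s.
Proof.
elim: s => [|z s IH] /=; first by rewrite inE eqxx.
rewrite minEle; case: ifP => _; first by rewrite !inE eqxx orbT.
move: IH; rewrite !inE => /orP[->//|H]; by rewrite H !orbT.
Qed.

Lemma min_over_mem (f : nat -> R) S : S != [::] -> min_over f S \in map f S.
Proof. by case: S => // y S _ /=; exact: foldr_min_mem. Qed.

Lemma min_over_eq (f g : nat -> R) S : {in S, f =1 g} -> min_over f S = min_over g S.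
Proof.
case: S => // y S H /=.
have Hy : f y = g y by apply: H; rewrite inE eqxx.
have HS : {in S, f =1 g} by move=> z Hz; apply: H; rewrite inE Hz orbT.
rewrite Hy; elim: S HS {H} => //= z S IH H.
rewrite IH ?H ?inE ?eqxx //; move=> w Hw; apply: H; by rewrite inE Hw orbT.
Qed.

Lemma min_over_0 (f : nat -> R) S : (forall y, f y = 0) -> min_over f S = 0.
Proof.
move=> H; case: S => //= y S; rewrite H; elim: S => //= z S ->.
by rewrite H minxx.
Qed.

Lemma list_max (V : seq R) (P : R -> Prop) :
  (exists v, v \in V /\ P v) ->
  exists v, P v /\ forall w, w \in V -> P w -> w <= v.
Proof.
elim: V => [|a V IH] [v [Hv Pv]]; first by rewrite in_nil in Hv.
case: (classic (exists v, v \in V /\ P v)) => [/IH [m [Pm Hm]]|Hno].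
  case: (classic (P a)) => Pa.
    case: (leP a m) => Ham.
      exists m; split => // w; rewrite inE => /orP[/eqP->//|/Hm]; exact.
    exists a; split => // w; rewrite inE => /orP[/eqP->//|Hw Pw].
    exact: le_trans (Hm w Hw Pw) (ltW Ham).
  exists m; split => // w; rewrite inE => /orP[/eqP->//|/Hm]; exact.
exists a; split.
  move: Hv; rewrite inE => /orP[/eqP<-//|Hv]; case: Hno; by exists v.
move=> w; rewrite inE => /orP[/eqP->//|Hw Pw]; case: Hno; by exists w.
Qed.

Lemma exists_topK n K (f : nat -> R) : (K <= n)%N ->
  exists S, is_Ksubset n K S /\
    forall S', is_Ksubset n K S' -> min_over f S' <= min_over f S.
Proof.
move=> HK.
have Hi : is_Ksubset n K (iota 0 K).
  rewrite /is_Ksubset iota_uniq size_iota eqxx /=.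
  by apply/allP => y; rewrite mem_iota add0n => /leq_trans; apply.
have Hmem : forall S, is_Ksubset n K S -> min_over f S \in 0 :: map f (iota 0 n).
  move=> S /and3P[_ _ /allP Ha]; case: (eqVneq S [::]) => [->|HS].
    by rewrite inE eqxx.
  move/mapP: (min_over_mem f HS) => [y Hy ->].
  rewrite inE; apply/orP; right; apply/mapP; exists y => //.
  by rewrite mem_iota add0n Ha.
have [v [[S [HS <-]] Hv]] := @list_max (0 :: map f (iota 0 n))
   (fun v => exists S, is_Ksubset n K S /\ min_over f S = v)
   (ex_intro _ _ (conj (Hmem _ Hi) (ex_intro _ (iota 0 K) (conj Hi erefl)))).
exists S; split => // S' HS'; apply: Hv; first exact: Hmem.
by exists S'.
Qed.

Definition phase (out : seq event -> seq nat) (h : seq event) : action :=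
  let cands := undup (observed h) in
  let done := map fst (scored h) in
  match [seq y <- cands | y \notin done] with
  | y :: _ => ComputeScore y
  | [::] => Output (out h)
  end.

Definition fagin_out (K : nat) (h : seq event) : seq nat :=
  take K (map fst (sort (fun a b : nat * R => b.2 <= a.2) (scored h))).

Lemma fagin_eq Rn K u h : fagin Rn K u h =
  if has is_score_event h then phase (fagin_out K) h
  else if ((count is_access_event h) %% Rn != 0)%N ||
          (n_seen_everywhere Rn h < K)%N
       then SortedAccess ((count is_access_event h) %% Rn)
       else phase (fagin_out K) h.
Proof. by []. Qed.

Definition sc_ev Rn I (s : seq nat) : seq event :=
  map (fun y => EvScore y (score Rn I y)) s.

Lemma observed_sc Rn I h s : observed (h ++ sc_ev Rn I s) = observed h.
Proof. by rewrite /observed pmap_cat; elim: s => [|y s IH] /=; rewrite ?cats0. Qed.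

Lemma scored_nil h : ~~ has is_score_event h -> scored h = [::].
Proof. by elim: h => // -[r o|y s] h IH //=. Qed.

Lemma scored_sc Rn I h s : scored (h ++ sc_ev Rn I s) =
  scored h ++ map (fun y => (y, score Rn I y)) s.
Proof. by rewrite /scored pmap_cat; congr (_ ++ _); elim: s => //= y s ->. Qed.

Lemma has_sc Rn I h s : has is_score_event (h ++ sc_ev Rn I s) =
  has is_score_event h || (s != [::]).
Proof. by rewrite has_cat; case: s => [|y s] /=; rewrite ?orbF ?orbT. Qed.

Lemma filter_take (s : seq nat) j : uniq s ->
  [seq y <- s | y \notin take j s] = drop j s.
Proof.
move=> Hu; rewrite -{2}(cat_take_drop j s) filter_cat.
have -> : [seq y <- take j s | y \notin take j s] = [::].
  by apply/eqP; rewrite -size_eq0 size_filter -leqn0 leqNgt -has_count;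
     apply/hasP => -[y Hy]; rewrite Hy.
rewrite /=; apply/all_filterP/allP => y Hy.
move: Hu; rewrite -{1}(cat_take_drop j s) cat_uniq => /and3P[_ /hasPn H _].
exact: H.
Qed.

Lemma phase_at Rn I out h0 j :
  ~~ has is_score_event h0 ->
  (j <= size (undup (observed h0)))%N ->
  phase out (h0 ++ sc_ev Rn I (take j (undup (observed h0)))) =
  if (j < size (undup (observed h0)))%N
  then ComputeScore (nth 0%N (undup (observed h0)) j)
  else Output (out (h0 ++ sc_ev Rn I (take j (undup (observed h0))))).
Proof.
move=> Hn Hj; rewrite /phase observed_sc scored_sc (scored_nil Hn) /= -map_comp.
rewrite (@eq_map _ _ _ id) // map_id filter_take ?undup_uniq //.
case: ltnP => Hlt; first by rewrite (drop_nth 0%N Hlt).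
by rewrite drop_oversize.
Qed.

Lemma score_run Rn (A : algorithm) K I k0 out :
  ~~ has is_score_event (history Rn A K I k0) ->
  (forall j, (j <= size (undup (observed (history Rn A K I k0))))%N ->
     A K (qvec I) (history Rn A K I k0 ++ sc_ev Rn I (take j (undup (observed (history Rn A K I k0))))) =
     phase out (history Rn A K I k0 ++ sc_ev Rn I (take j (undup (observed (history Rn A K I k0)))))) ->
  forall j, (j <= size (undup (observed (history Rn A K I k0))))%N ->
    history Rn A K I (k0 + j) =
    history Rn A K I k0 ++ sc_ev Rn I (take j (undup (observed (history Rn A K I k0)))).
Proof.
set h0 := history Rn A K I k0; set cands := undup (observed h0).
move=> Hn Hact; elim=> [|j IH] Hj; first by rewrite addn0 take0 cats0.
have Hj' : (j <= size cands)%N by exact: ltnW.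
rewrite addnS /= IH // Hact // (@phase_at Rn I out h0 j Hn Hj') Hj /=.
by rewrite (take_nth 0%N Hj) /sc_ev map_rcons rcons_cat.
Qed.

Lemma phase_nwg out h y : phase out h = ComputeScore y -> y \in observed h.
Proof.
rewrite /phase; case E: [seq _ <- _ | _] => [|z s] //= [<-].
have : z \in [seq y <- undup (observed h) | y \notin map fst (scored h)] by rewrite E inE eqxx.
by rewrite mem_filter mem_undup => /andP[].
Qed.

Lemma iotaSr k : iota 0 k.+1 = rcons (iota 0 k) k.
Proof. by rewrite -cats1 -addn1 iotaD. Qed.

Definition look (h : seq event) (y : nat) : R :=
  (nth (0%N, 0) (scored h) (index y (map fst (scored h)))).2.

Definition out_naive (K : nat) (h : seq event) : seq nat :=
  epsilon (inhabits [::]) (fun S => is_Ksubset (size (scored h)) K S /\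
    forall S', is_Ksubset (size (scored h)) K S' ->
      min_over (look h) S' <= min_over (look h) S).

Definition is_none_access (e : event) : bool :=
  if e is EvAccess _ None then true else false.

Definition naive (K : nat) (h : seq event) : action :=
  if has is_score_event h || has is_none_access h then phase (out_naive K) h
  else SortedAccess 0.

Definition algA (Rn : nat) : algorithm := fun K u h =>
  if all (fun r => u r == 0) (iota 0 Rn) then Output (iota 0 K) else naive K h.

Definition acc0 (I : instance) (k : nat) : seq event :=
  map (fun j => EvAccess 0 (Some (nth 0%N (lists I 0) j, lval I 0 (nth 0%N (lists I 0) j))))
      (iota 0 k).

Lemma observed_acc0 I k : observed (acc0 I k) = mkseq (nth 0%N (lists I 0)) k.
Proof.
elim: k => // k IH.
rewrite /acc0 /mkseq !iotaSr !map_rcons -!cats1 /observed pmap_cat.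
by rewrite -/(observed _) -/(acc0 I k) IH.
Qed.

Lemma look_sc Rn I h0 s y : ~~ has is_score_event h0 -> y \in s ->
  look (h0 ++ sc_ev Rn I s) y = score Rn I y.
Proof.
move=> Hn Hy; rewrite /look scored_sc (scored_nil Hn) /= -map_comp.
rewrite (@eq_map _ _ _ id) // map_id.
by rewrite (nth_map 0%N) ?index_mem //= nth_index.
Qed.

Lemma algA_nwg Rn K I c : no_wild_guess Rn (algA Rn) K I c.
Proof.
move=> k _ y; rewrite /algA; case: ifP => // _; rewrite /naive.
case: ifP => // _; exact: phase_nwg.
Qed.

Lemma all0_score Rn I : all (fun r => qvec I r == 0) (iota 0 Rn) ->
  forall y, score Rn I y = 0.
Proof.
move=> /allP H y; rewrite /score big1 // => i _.
have Hi : (nat_of_ord i \in iota 0 Rn) by rewrite mem_iota add0n ltn_ord.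
by rewrite /lval (eqP (H i Hi)) Rmult_0_l.
Qed.

Lemma iota_Ksub n K : (K <= n)%N -> is_Ksubset n K (iota 0 K).
Proof.
move=> HK; rewrite /is_Ksubset iota_uniq size_iota eqxx /=.
by apply/allP => y; rewrite mem_iota add0n => /leq_trans; apply.
Qed.

Lemma algA_in_class Rn : (0 < Rn)%N -> in_class Rn (algA Rn).
Proof.
move=> HR K I HI HK.
case Hu: (all (fun r => qvec I r == 0) (iota 0 Rn)).
  exists 0%N, (iota 0 K); split; last split.
  - by split => //=; rewrite /algA Hu.
  - exact: algA_nwg.
  split; first exact: iota_Ksub.
  by move=> S' _; rewrite !min_over_0 //; exact: all0_score.
have [Hperm _] := HI 0%N HR.
set n := n_targets I.
set l0 := lists I 0.
have Hsz : size l0 = n by rewrite (perm_size Hperm) size_iota.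
have Hmem : forall y, (y \in l0) = (y < n)%N by move=> y; rewrite (perm_mem Hperm) mem_iota.
have Hun : uniq l0 by rewrite (perm_uniq Hperm) iota_uniq.
have HA : forall h, algA Rn K (qvec I) h = naive K h by move=> h; rewrite /algA Hu.
have Hacc : forall k, (k <= n)%N -> history Rn (algA Rn) K I k = acc0 I k.
  elim=> [|k IH] Hk; first by [].
  rewrite [RHS]/acc0 iotaSr map_rcons -/(acc0 I k) /=.
  rewrite IH ?(ltnW Hk) // HA /naive.
  have -> : has is_score_event (acc0 I k) = false by rewrite /acc0 has_map; apply/hasPn.
  have -> : has is_none_access (acc0 I k) = false by rewrite /acc0 has_map; apply/hasPn.
  rewrite /= /accesses_to /acc0 count_map.
  rewrite (@eq_count _ _ predT) // count_predT size_iota HR Hsz Hk /=.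
  by [].
have Hacc0 : forall k, (k <= n)%N -> algA Rn K (qvec I) (acc0 I k) = SortedAccess 0.
  move=> k Hk; rewrite HA /naive.
  have -> : has is_score_event (acc0 I k) = false by rewrite /acc0 has_map; apply/hasPn.
  by have -> : has is_none_access (acc0 I k) = false by rewrite /acc0 has_map; apply/hasPn.
set h0 := rcons (acc0 I n) (EvAccess 0 None).
have Hh0 : history Rn (algA Rn) K I n.+1 = h0.
  rewrite /= Hacc // Hacc0 //= /accesses_to /acc0 count_map.
  rewrite (@eq_count _ _ predT) // count_predT size_iota HR Hsz ltnn /=.
  by [].
have Hn0 : ~~ has is_score_event h0.
  by rewrite /h0 -cats1 has_cat /acc0 has_map orbF; apply/hasPn.
have Hobs : undup (observed h0) = l0.
  rewrite /h0 -cats1 /observed pmap_cat cats0 -/(observed _) observed_acc0.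
  by rewrite -Hsz mkseq_nth undup_id.
have Hact : forall j, (j <= size (undup (observed (history Rn (algA Rn) K I n.+1))))%N ->
   algA Rn K (qvec I) (history Rn (algA Rn) K I n.+1 ++ sc_ev Rn I (take j (undup (observed (history Rn (algA Rn) K I n.+1))))) =
   phase (out_naive K) (history Rn (algA Rn) K I n.+1 ++ sc_ev Rn I (take j (undup (observed (history Rn (algA Rn) K I n.+1))))).
  move=> j _; rewrite HA /naive Hh0 !has_cat.
  have Hna : has is_none_access h0 by rewrite /h0 has_rcons.
  by rewrite Hna !orbT.
have Hn0' : ~~ has is_score_event (history Rn (algA Rn) K I n.+1) by rewrite Hh0.
have Hsr := @score_run Rn (algA Rn) K I n.+1 (out_naive K) Hn0' Hact.
rewrite Hh0 Hobs in Hsr.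
have Hph := fun j => @phase_at Rn I (out_naive K) h0 j Hn0.
rewrite Hobs in Hph.
have HAp : forall j, algA Rn K (qvec I) (h0 ++ sc_ev Rn I (take j l0)) =
                     phase (out_naive K) (h0 ++ sc_ev Rn I (take j l0)).
  move=> j; rewrite HA /naive !has_cat.
  have Hna : has is_none_access h0 by rewrite /h0 has_rcons.
  by rewrite Hna !orbT.
set hf := h0 ++ sc_ev Rn I l0.
have Hhf : history Rn (algA Rn) K I (n.+1 + n) = hf.
  by rewrite Hsr ?Hsz // take_oversize ?Hsz.
exists (n.+1 + n)%N, (out_naive K hf); split; last split.
- split.
    have Hhf' : hf = h0 ++ sc_ev Rn I (take n l0) by rewrite take_oversize ?Hsz.
    rewrite Hhf {1}Hhf' HAp Hph ?Hsz // ltnn; by rewrite [in RHS]Hhf'.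
  move=> k Hk S'; case: (leqP k n) => Hkn.
    by rewrite Hacc // Hacc0.
  have -> : k = (n.+1 + (k - n.+1))%N by rewrite subnKC.
  have Hj : (k - n.+1 < n)%N by rewrite ltn_subLR.
  rewrite Hsr; last by rewrite Hsz ltnW.
  by rewrite HAp Hph Hsz ?Hj // ltnW.
- exact: algA_nwg.
have Hscf : size (scored hf) = n by rewrite /hf scored_sc (scored_nil Hn0) size_map.
have Hlook : forall S, is_Ksubset n K S -> min_over (score Rn I) S = min_over (look hf) S.
  move=> S /and3P[_ _ /allP Ha]; apply: min_over_eq => y Hy.
  by rewrite /hf look_sc // Hmem Ha.
have HK' : (K <= size (scored hf))%N by rewrite Hscf.
have [S0 HS0] := exists_topK (look hf) HK'.
have := @epsilon_spec _ (inhabits [::]) (fun S => is_Ksubset (size (scored hf)) K S /\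
    forall S', is_Ksubset (size (scored hf)) K S' ->
      min_over (look hf) S' <= min_over (look hf) S) (ex_intro _ S0 HS0).
rewrite -/(out_naive K hf) Hscf => -[HS HSm].
split; first exact: HS.
move=> S' HS'; rewrite !Hlook //; exact: HSm.
Qed.
Local Open Scope nat_scope.

Lemma cnt Rn k r : (0 < Rn)%N -> (r < Rn)%N ->
  count (fun j => j %% Rn == r) (iota 0 k) = (k %/ Rn + (r < k %% Rn))%N.
Proof.
move=> H0 Hr; elim: k => [|k IH]; first by rewrite div0n mod0n.
rewrite -addn1 iotaD count_cat IH /= addn0 add0n.
have := divn_eq k Rn; have := ltn_pmod k H0.
have := divn_eq (k+1) Rn; have := ltn_pmod (k+1) H0.
case: (ltnP r (k %% Rn)); case: (ltnP r ((k+1) %% Rn)); case: eqP => /=.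
all: move=> *; nia.
Qed.

Definition Fev Rn I j : event :=
  EvAccess (j %% Rn) (Some (nth 0%N (lists I (j %% Rn)) (j %/ Rn),
                            lval I (j %% Rn) (nth 0%N (lists I (j %% Rn)) (j %/ Rn)))).

Definition accF Rn I k := map (Fev Rn I) (iota 0 k).

Lemma accF_S Rn I k : accF Rn I k.+1 = rcons (accF Rn I k) (Fev Rn I k).
Proof. by rewrite /accF iotaSr map_rcons. Qed.

Lemma accF_noscore Rn I k : has is_score_event (accF Rn I k) = false.
Proof. by rewrite /accF has_map; apply/hasPn. Qed.

Lemma accF_count Rn I k : count is_access_event (accF Rn I k) = k.
Proof. by rewrite /accF count_map (@eq_count _ _ predT) // count_predT size_iota. Qed.

Lemma accF_accesses Rn I k r : accesses_to r (accF Rn I k) =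
  count (fun j => j %% Rn == r) (iota 0 k).
Proof. by rewrite /accesses_to /accF count_map. Qed.

Lemma seen_accF Rn I k r : seen_in r (accF Rn I k) =
  [seq nth 0%N (lists I r) (j %/ Rn) | j <- iota 0 k & j %% Rn == r].
Proof.
elim: k => // k IH.
rewrite accF_S iotaSr filter_rcons -cats1 /seen_in pmap_cat -/(seen_in _ _) IH /=.
by case: eqP => [<-|_] /=; rewrite ?eqxx ?map_rcons ?cats1 ?cats0.
Qed.

Lemma observed_accF Rn I k : observed (accF Rn I k) =
  [seq nth 0%N (lists I (j %% Rn)) (j %/ Rn) | j <- iota 0 k].
Proof.
elim: k => // k IH.
by rewrite accF_S iotaSr -cats1 /observed pmap_cat -/(observed _) IH /= map_rcons cats1.
Qed.

Lemma fagin_run Rn K I : (0 < Rn)%N -> valid_instance Rn I ->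
  (K <= n_seen_everywhere Rn (accF Rn I (n_targets I * Rn)))%N ->
  exists cB SB m, runs Rn (fagin Rn) K I cB SB /\
    (K <= n_seen_everywhere Rn (accF Rn I (m * Rn)))%N /\ (m <= cB)%N.
Proof.
move=> HR HI HP.
set n := n_targets I.
have Hex : exists m, (K <= n_seen_everywhere Rn (accF Rn I (m * Rn)))%N by exists n.
case: (ex_minnP Hex) => m Pm Hmin.
have Hmn : (m <= n)%N := Hmin n HP.
have Hsz : forall r, (r < Rn)%N -> size (lists I r) = n.
  by move=> r Hr; have [Hp _] := HI r Hr; rewrite (perm_size Hp) size_iota.
have HF : forall k, (k < m * Rn)%N ->
    fagin Rn K (qvec I) (accF Rn I k) = SortedAccess (k %% Rn).
  move=> k Hk; rewrite fagin_eq accF_noscore accF_count /=.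
  case E: (k %% Rn != 0)%N => //=.
  have Hk0 : k = (k %/ Rn * Rn)%N by rewrite {1}(divn_eq k Rn) (eqP (negbFE E)) addn0.
  have Hlt : (k %/ Rn < m)%N by rewrite ltn_divLR.
  suff -> : (n_seen_everywhere Rn (accF Rn I k) < K)%N by [].
  rewrite ltnNge; apply/negP => HPk.
  have := Hmin (k %/ Rn); rewrite -Hk0 => /(_ HPk); by rewrite leqNgt Hlt.
have Hacc : forall k, (k <= m * Rn)%N -> history Rn (fagin Rn) K I k = accF Rn I k.
  elim=> [|k IH] Hk //.
  have Hmod := ltn_pmod k HR.
  rewrite /= IH ?(ltnW Hk) // HF //= accF_accesses (cnt _ HR Hmod) ltnn addn0.
  have Hlt : (k %/ Rn < m)%N by rewrite ltn_divLR.
  rewrite (Hsz _ Hmod) (leq_trans Hlt Hmn) /=.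
  by rewrite accF_S /Fev Hmod.
set k0 := (m * Rn)%N.
have Hstop : fagin Rn K (qvec I) (accF Rn I k0) = phase (fagin_out K) (accF Rn I k0).
  by rewrite fagin_eq accF_noscore accF_count /k0 modnMl /= ltnNge Pm.
have Hh0 := Hacc k0 (leqnn _).
set cands := undup (observed (accF Rn I k0)).
have Hact : forall j, fagin Rn K (qvec I) (accF Rn I k0 ++ sc_ev Rn I (take j cands)) =
                      phase (fagin_out K) (accF Rn I k0 ++ sc_ev Rn I (take j cands)).
  move=> j; case: (take j cands) => [|y s]; first by rewrite /= cats0.
  by rewrite fagin_eq has_sc accF_noscore.
have Hn0 : ~~ has is_score_event (history Rn (fagin Rn) K I k0) by rewrite Hh0 accF_noscore.
have Hsr := @score_run Rn (fagin Rn) K I k0 (fagin_out K) Hn0.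
rewrite Hh0 -/cands in Hsr.
have {}Hsr := Hsr (fun j _ => Hact j).
have Hph := fun j => @phase_at Rn I (fagin_out K) (accF Rn I k0) j (negbT (accF_noscore Rn I k0)).
rewrite -/cands in Hph.
exists (k0 + size cands)%N,
  (fagin_out K (accF Rn I k0 ++ sc_ev Rn I (take (size cands) cands))), m.
split; last split => //.
  split.
    by rewrite Hsr // Hact Hph // ltnn.
  move=> k Hk S'; case: (ltnP k k0) => Hkk.
    by rewrite Hacc; [rewrite HF | exact: ltnW].
  have -> : k = (k0 + (k - k0))%N by rewrite subnKC.
  have Hj : (k - k0 < size cands)%N by rewrite ltn_subLR.
  rewrite Hsr; last exact: ltnW.
  by rewrite Hact Hph; [rewrite Hj | exact: ltnW].
apply: leq_trans (leq_addr _ _); rewrite /k0; exact: leq_pmulr.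
Qed.
Local Open Scope ring_scope.

Lemma sorted_true (T : Type) (e : rel T) (s : seq T) : (forall a b, e a b) -> sorted e s.
Proof.
move=> H; case: s => //= x s; elim: s x => //= y s IH x; by rewrite H IH.
Qed.

Definition Inst (n : nat) : instance :=
  Instance n (fun _ => 0) (fun _ _ => 0)
    (fun r => if r == 0%N then iota 0 n else rev (iota 0 n)).

Lemma Inst_valid Rn n : valid_instance Rn (Inst n).
Proof.
move=> r _; split.
  by rewrite /=; case: (r == 0%N); rewrite ?perm_refl ?perm_rev.
by apply: sorted_true => a b; rewrite /lval /=; exact: le_refl.
Qed.

Local Open Scope nat_scope.

Lemma nse_full Rn K I : 0 < Rn -> valid_instance Rn I -> K <= n_targets I ->
  K <= n_seen_everywhere Rn (accF Rn I (n_targets I * Rn)).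
Proof.
move=> HR HI HK; set n := n_targets I; set h := accF Rn I (n * Rn).
have Hmem : forall r y, r < Rn -> (y \in lists I r) = (y < n).
  by move=> r y Hr; have [Hp _] := HI r Hr; rewrite (perm_mem Hp) mem_iota.
have Hsz : forall r, r < Rn -> size (lists I r) = n.
  by move=> r Hr; have [Hp _] := HI r Hr; rewrite (perm_size Hp) size_iota.
have Hseen : forall r y, r < Rn -> y < n -> y \in seen_in r h.
  move=> r y Hr Hy; rewrite /h seen_accF; apply/mapP.
  have Hi : index y (lists I r) < n by rewrite -(Hsz r Hr) index_mem Hmem.
  exists (index y (lists I r) * Rn + r).
    rewrite mem_filter modnMDl modn_small // eqxx /= mem_iota add0n.
    apply: (leq_trans (n := (index y (lists I r)).+1 * Rn)).
      by rewrite mulSnr ltn_add2l.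
    by rewrite leq_mul2r Hi orbT.
  by rewrite divnMDl // divn_small // addn0 nth_index // Hmem.
have Hobs : forall y, y \in observed h -> y < n.
  move=> y; rewrite /h observed_accF => /mapP [j]; rewrite mem_iota add0n => Hj ->.
  have Hr := ltn_pmod j HR.
  rewrite -(Hmem _ _ Hr); apply: mem_nth; rewrite (Hsz _ Hr) ltn_divLR //.
have Hso : forall r y, r < Rn -> y \in seen_in r h -> y \in observed h.
  move=> r y Hr; rewrite /h seen_accF observed_accF => /mapP [j].
  rewrite mem_filter => /andP[/eqP Hjr Hj] ->; apply/mapP; exists j => //.
  by rewrite Hjr.
rewrite /n_seen_everywhere.
have -> : [seq y <- undup (observed h) | all (fun r => y \in seen_in r h) (iota 0 Rn)]
          = undup (observed h).
  apply/all_filterP/allP => y; rewrite mem_undup => /Hobs Hy.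
  by apply/allP => r; rewrite mem_iota add0n => Hr; apply: Hseen.
suff Hs : size (iota 0 n) <= size (undup (observed h)).
  by rewrite size_iota in Hs; exact: leq_trans HK Hs.
apply: uniq_leq_size; first exact: iota_uniq.
move=> y; rewrite mem_iota add0n mem_undup => Hy; apply: (Hso 0) => //.
exact: Hseen.
Qed.

Lemma nse_Inst Rn K n m : 1 < Rn -> 0 < K -> m + m <= n ->
  n_seen_everywhere Rn (accF Rn (Inst n) (m * Rn)) < K.
Proof.
move=> HR HK Hm; have HR0 : 0 < Rn by apply: ltnW.
apply: (leq_trans _ HK); rewrite ltnS leqn0.
rewrite /n_seen_everywhere size_filter eqn0Ngt -has_count; apply/hasPn => y _.
apply/negP => /allP H.
have H0 : y \in seen_in 0 (accF Rn (Inst n) (m * Rn)) by apply: H; rewrite mem_iota.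
have H1 : y \in seen_in 1 (accF Rn (Inst n) (m * Rn)) by apply: H; rewrite mem_iota add0n.
move: H0 H1; rewrite !seen_accF.
move=> /mapP [j0]; rewrite mem_filter mem_iota add0n => /andP[_ Hj0] -> /=.
move=> /mapP [j1]; rewrite mem_filter mem_iota add0n => /andP[_ Hj1] /=.
have Hi0 : j0 %/ Rn < m by rewrite ltn_divLR.
have Hi1 : j1 %/ Rn < m by rewrite ltn_divLR.
rewrite nth_iota; last by apply: leq_trans Hi0 _; apply: leq_trans Hm; exact: leq_addl.
rewrite nth_rev ?size_iota; last by apply: leq_trans Hi1 _; apply: leq_trans Hm; exact: leq_addl.
rewrite nth_iota; last by rewrite subnSK; [ exact: leq_subr | apply: leq_trans Hi1 _; apply: leq_trans Hm; exact: leq_addl].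
lia.
Qed.

Local Open Scope ring_scope.

Theorem theorem3 (Rn K : nat) (hR : (2 <= Rn)%N) (hK : (1 <= K)%N) :
  ~ instance_optimal Rn K (fagin Rn).
Proof.
move=> [c [c' Hopt]].
have HR0 : (0 < Rn)%N by apply: ltnW.
set N := Num.Def.archi_bound `|c'|.
have HN : c' < N%:R.
  exact: le_lt_trans (ler_norm c') (archi_boundP (normr_ge0 c')).
set n := (2 * (N + K))%N.
set I := Inst n.
have HI : valid_instance Rn I by apply: Inst_valid.
have HKn : (K <= n_targets I)%N by rewrite /= /n; lia.
have HA := algA_in_class HR0.
have Hall : all (fun r => qvec I r == 0) (iota 0 Rn) by apply/allP => r _ /=.
have HrunA : runs Rn (algA Rn) K I 0 (iota 0 K).
  by split => //=; rewrite /algA Hall.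
have [cB [SB [m [HrunB [Pm Hm]]]]] := fagin_run HR0 HI (nse_full HR0 HI HKn).
have Hnm : (n < m + m)%N.
  rewrite ltnNge; apply/negP => Hle.
  by have := nse_Inst hR hK Hle; rewrite ltnNge Pm.
have := Hopt _ HA I HI HKn _ _ _ _ HrunB HrunA.
rewrite mulr0 add0r => HcB.
have : (N <= cB)%N by rewrite /n in Hnm; lia.
rewrite -(ler_nat R) => HNc.
have := lt_le_trans HN (le_trans HNc HcB).
by rewrite ltxx.
Qed.
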